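(* There exist bounding sequences $(n_k^-)_{k\in\omega},(n_k^+)_{k\in\omega}$ and a modified suitable family $\mathcal{F}=\{(a_\alpha,d_\alpha,b_\alpha,g_\alpha,c_\alpha,h_\alpha,e_\alpha,u_\alpha):\alpha\in2^\omega\}$ with respect to them, indexed by $2^\omega$ (so of size continuum, with distinct indices giving distinct tuples).
   Context: Slalom notation: for $c,h\in\omega^\omega$, $c^{\triangledown h}(n)=|[c(n)]^{\le h(n)}|$ (number of subsets of $\{0,\dots,c(n)-1\}$ of size $\le h(n)$). Auxiliary functions: $g_{c,h}(k)=\lfloor\log_2c(n)\rfloor$ for $k\in J_n$, where $\langle J_n\rangle$ is the partition of $\omega$ into consecutive intervals with $|J_n|=h(n)$; $f_{b,g}(k)=\sum_{l\le n}\lceil\log_2b(l)\rceil$ for $k\in I_n$, where $\langle I_n\rangle$ is the consecutive interval partition with $|I_n|=g(n)$; for increasing $f$, $e_f(k)=\min\{n:k<f(2^n)\}$. Bounding sequences: $(n_k^-),(n_k^+)$ natural numbers $\ge2$ with $n_k^-n_k^+<n_{k+1}^-$ for all $k$ and $\lim_k\log_{n_k^-}n_k^+=\infty$. Modified suitable family w.r.t. them: a family of tuples of functions in $\omega^\omega$ ($a,d,b,g,c,h,u$ increasing, $e$ nondecreasing) such that for all $\alpha\in A$: (S1) for all $k$, each of $a_\alpha(k),d_\alpha(k),b_\alpha(k),g_\alpha(k),b_\alpha^{\triangledown g_\alpha}(k),b_\alpha(k)/g_\alpha(k),h_\alpha(k),c_\alpha^{\triangledown h_\alpha}(k)$ lies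 in $[n_k^-,n_k^+]$; (S2) $h_\alpha<c_\alpha$ pointwise and $\limsup_k\frac{1}{d_\alpha(k)}\log_{d_\alpha(k)}(h_\alpha(k)+1)=\infty$; (S3) $b_\alpha/g_\alpha\ge d_\alpha$ pointwise; (S4) $a_\alpha\ge b_\alpha^{\triangledown g_\alpha}$ pointwise; (S7) for all $\beta\in A$, $\beta\ne\alpha$: $\lim_k\min\{c_\beta^{\triangledown h_\beta}(k)/d_\alpha(k),\ a_\alpha(k)/d_\beta(k)\}=0$; (MS1) $e_\alpha=e_{u_\alpha}$; (MS2) $e_\alpha(g_{c_\alpha,h_\alpha}(k))\ge2\log_2k$ for all $k\ge1$; (MS3) $f_{b_\alpha,g_\alpha}\le u_\alpha$ pointwise. *)

(* Defs.v *)
From mathcomp Require Import all_boot.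
From Stdlib Require Import Reals.

Set Implicit Arguments.
Unset Strict Implicit.
Unset Printing Implicit Defensive.

Definition incr (f : nat -> nat) : Prop := forall n, (f n < f n.+1)%N.
Definition nondecr (f : nat -> nat) : Prop := forall n, (f n <= f n.+1)%N.

(* c^{\triangledown h}(n) = |[c(n)]^{<= h(n)}| = sum_{i <= h(n)} binom(c(n), i) *)
Definition slalom_count (c h : nat -> nat) (n : nat) : nat :=
  (\sum_(i < (h n).+1) 'C(c n, i))%N.

(* partial sums S_h(n) = sum_{l<n} h(l): the interval J_n = [S_h n, S_h (n+1)) *)
Definition psum (h : nat -> nat) (n : nat) : nat := (\sum_(l < n) h l)%N.

(* the index n of the interval J_n (|J_l| = h l, consecutive) containing k:
   the least n with k < S_h(n+1).  When h(l) >= 1 for all l this n is <= k,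
   so the bounded search below computes it exactly. *)
Definition blk (h : nat -> nat) (k : nat) : nat :=
  find (fun n => (k < psum h n.+1)%N) (iota 0 k.+1).

Definition g_aux (c h : nat -> nat) (k : nat) : nat := trunc_log 2 (c (blk h k)).

Definition f_aux (b g : nat -> nat) (k : nat) : nat :=
  (\sum_(l < (blk g k).+1) up_log 2 (b l))%N.

(* e_f(k) = min { n : k < f(2^n) }; for strictly increasing f, f(2^k) > k,
   so the minimum is <= k and the bounded search computes it exactly. *)
Definition e_aux (f : nat -> nat) (k : nat) : nat :=
  find (fun n => (k < f (2 ^ n))%N) (iota 0 k.+1).

Definition log_base (b x : R) : R := (ln x / ln b)%R.
Definition log2 (x : R) : R := (ln x / ln 2)%R.

Definition bounding_seqs (nm np : nat -> nat) : Prop :=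
  (forall k, 2 <= nm k)%N /\ (forall k, 2 <= np k)%N /\
  (forall k, nm k * np k < nm k.+1)%N /\
  cv_infty (fun k => log_base (INR (nm k)) (INR (np k))).

Record tuple8 := Tuple8 {
  ta : nat -> nat; td : nat -> nat; tb : nat -> nat; tg : nat -> nat;
  tc : nat -> nat; th : nat -> nat; te : nat -> nat; tu : nat -> nat }.

Definition in_bounds (nm np : nat -> nat) (k x : nat) : Prop :=
  (nm k <= x <= np k)%N.

Definition single_conds (nm np : nat -> nat) (t : tuple8) : Prop :=
  let a := ta t in let d := td t in let b := tb t in let g := tg t in
  let c := tc t in let h := th t in let e := te t in let u := tu t in
  incr a /\ incr d /\ incr b /\ incr g /\ incr c /\ incr h /\ incr u /\ nondecr e /\
  (* (S1) *)
  (forall k,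
     in_bounds nm np k (a k) /\ in_bounds nm np k (d k) /\
     in_bounds nm np k (b k) /\ in_bounds nm np k (g k) /\
     in_bounds nm np k (slalom_count b g k) /\
     (INR (nm k) <= INR (b k) / INR (g k) <= INR (np k))%R /\
     in_bounds nm np k (h k) /\ in_bounds nm np k (slalom_count c h k)) /\
  (* (S2) *)
  (forall k, (h k < c k)%N) /\
  (forall (M : R) (N : nat), exists k, (N <= k)%N /\
     (M < / INR (d k) * log_base (INR (d k)) (INR (h k + 1)))%R) /\
  (* (S3) *)
  (forall k, (INR (b k) / INR (g k) >= INR (d k))%R) /\
  (* (S4) *)
  (forall k, (a k >= slalom_count b g k)%N) /\
  (* (MS1) *)
  (forall k, e k = e_aux u k) /\
  (* (MS2) *)
  (forall k, (1 <= k)%N -> (INR (e (g_aux c h k)) >= 2 * log2 (INR k))%R) /\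
  (* (MS3) *)
  (forall k, (f_aux b g k <= u k)%N).

(* (S7) for two distinct members alpha, beta *)
Definition pair_cond (ta_ tb_ : tuple8) : Prop :=
  Un_cv (fun k => Rmin (INR (slalom_count (tc tb_) (th tb_) k) / INR (td ta_ k))
                       (INR (ta ta_ k) / INR (td tb_ k))) 0.

Definition modified_suitable_family (A : Type) (nm np : nat -> nat)
    (F : A -> tuple8) : Prop :=
  (forall alpha, single_conds nm np (F alpha)) /\
  (forall alpha beta, beta <> alpha -> pair_cond (F alpha) (F beta)).

(* Main.v *)
Require Import Defs.
From mathcomp Require Import all_boot.
From Stdlib Require Import Reals.
From Stdlib Require Import Lra FunctionalExtensionality Classical.
From mathcomp Require Import all_boot zify.

Lemma find_iota_le (P : pred nat) m j : P j -> (find P (iota 0 m) <= j)%N.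
Proof.
move=> Pj; case: (ltnP j m) => hj.
  rewrite leqNgt; apply/negP => /(before_find 0).
  by rewrite nth_iota // add0n Pj.
by apply: leq_trans (find_size _ _) _; rewrite size_iota.
Qed.

Lemma find_iota_spec (P : pred nat) m j : (j < m)%N -> P j ->
  (find P (iota 0 m) < m)%N /\ P (find P (iota 0 m)).
Proof.
move=> hj Pj.
have hs : has P (iota 0 m) by apply/hasP; exists j => //; rewrite mem_iota.
split; first by move: hs; rewrite has_find size_iota.
have := nth_find 0 hs; rewrite nth_iota ?add0n //.
by move: hs; rewrite has_find size_iota.
Qed.

Lemma sum_mono (F : nat -> nat) j j' : (j <= j')%N ->
  (\sum_(l < j) F l <= \sum_(l < j') F l)%N.
Proof.
move=> /subnK <-; elim: (j' - j)%N => [|d IH]; first by rewrite add0n.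
by rewrite addSn big_ord_recr /=; apply: leq_trans IH (leq_addr _ _).
Qed.

Lemma sum_le_const (F : nat -> nat) j B : (forall l, (l < j)%N -> (F l <= B)%N) ->
  (\sum_(l < j) F l <= j * B)%N.
Proof.
move=> H; apply: leq_trans (_ : \sum_(l < j) B <= _)%N.
  by apply: leq_sum => i _; apply: H.
by rewrite sum_nat_const card_ord.
Qed.

Lemma psumS (h : nat -> nat) n : psum h n.+1 = (psum h n + h n)%N.
Proof. by rewrite /psum big_ord_recr. Qed.

Lemma psum_ge (h : nat -> nat) k : (forall l, 1 <= h l)%N -> (k <= psum h k)%N.
Proof.
move=> H; elim: k => [|k IH] //; rewrite psumS.
have := H k; lia.
Qed.

Lemma blk_spec h k : (forall l, 1 <= h l)%N -> (blk h k < k.+1)%N /\ (k < psum h (blk h k).+1)%N.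
Proof.
move=> H; apply: (@find_iota_spec (fun n => k < psum h n.+1)%N _ k) => //.
exact: psum_ge.
Qed.

Lemma blk_le h k n : (k < psum h n.+1)%N -> (blk h k <= n)%N.
Proof. by move=> H; apply: (@find_iota_le (fun n => k < psum h n.+1)%N). Qed.

Lemma blk_mono h k k' : (forall l, 1 <= h l)%N -> (k <= k')%N -> (blk h k <= blk h k')%N.
Proof.
move=> H hk; apply: blk_le; have [_ ] := @blk_spec h k' H; lia.
Qed.

Lemma incr_mono f : incr f -> forall m n, (m <= n)%N -> (f m <= f n)%N.
Proof.
move=> H m n /subnK <-; elim: (n - m)%N => [|d IH] //.
by rewrite addSn; apply: leq_trans IH (ltnW (H _)).
Qed.

Lemma sum_bin_le n m : (\sum_(i < m) 'C(n, i) <= 2 ^ n)%N.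
Proof.
rewrite -(big_mkord xpredT (fun i => 'C(n, i))).
apply: leq_trans (_ : \sum_(0 <= i < m + n.+1) 'C(n, i) <= _)%N.
  by rewrite [X in (_ <= X)%N](@big_cat_nat _ _ _ m) ?leq_addr //= leq_addr.
rewrite (@big_cat_nat _ _ _ n.+1) ?leq_addl //=.
rewrite [X in (_ + X)%N]big1_seq; last first.
  by move=> i /andP [_]; rewrite mem_index_iota => /andP [hi _]; rewrite bin_small.
rewrite addn0 big_mkord.
have := expnDn 1 1 n; rewrite add1n => ->.
by apply: leq_sum => i _; rewrite !exp1n !muln1.
Qed.

Lemma sum_bin_ge n m : (1 < m)%N -> (n <= \sum_(i < m) 'C(n, i))%N.
Proof.
case: m => [|[|m]] // _; rewrite !big_ord_recl /= bin1; lia.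
Qed.

Definition hh k D := D ^ (D * k.+1).
Definition gg k D := 4 * (k.+1 * k.+1) * (hh k D * hh k D) + 1.
Definition bb k D := D * gg k D.
Definition cc k D := 2 ^ (k.+2 * bb k D).
Definition top k D := 2 ^ cc k D.
Definition step k D := k.+1 * top k D.

Lemma band_hh k D : 0 < D -> D <= hh k D.
Proof.
move=> hD; rewrite /hh -{1}(expn1 D); apply: leq_pexp2l => //.
by rewrite muln_gt0 hD.
Qed.

Lemma band_hg k D : 0 < D -> hh k D < gg k D.
Proof. move=> hD; have := band_hh k D hD; rewrite /gg; nia. Qed.

Lemma band_gb k D : 0 < D -> gg k D <= bb k D.
Proof. move=> hD; rewrite /bb; nia. Qed.

Lemma band_bc' k D : bb k D < cc k D.
Proof.
rewrite /cc; apply: leq_trans (ltn_expl (bb k D) (isT : 1 < 2)) _.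
by apply: leq_pexp2l => //; rewrite leq_pmull.
Qed.

Lemma band_ct k D : cc k D < top k D.
Proof. exact: ltn_expl. Qed.

Lemma band_ts k D : top k D <= step k D.
Proof. by rewrite /step leq_pmull. Qed.

Lemma band_Dt k D : 0 < D -> D < top k D.
Proof.
move=> hD; have := band_hh k D hD; have := band_hg k D hD; have := band_gb k D hD.
have := band_bc' k D; have := band_ct k D; lia.
Qed.

Fixpoint nmf k := if k is k'.+1 then nmf k' * iter (2 ^ k') (step k') (nmf k') + 1 else 2.
Definition Dk k p := iter p (step k) (nmf k).
Definition npf k := Dk k (2 ^ k).

Lemma Dk_S k p : Dk k p.+1 = step k (Dk k p).
Proof. by []. Qed.

Lemma step_gt k D : 0 < D -> D < step k D.
Proof. move=> hD; have := band_Dt k D hD; have := band_ts k D; lia. Qed.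

Lemma nmf_S k : nmf k.+1 = nmf k * npf k + 1.
Proof. by []. Qed.

Lemma nmf_pos k : 0 < nmf k -> forall p, nmf k <= Dk k p.
Proof.
move=> h; elim=> [|p IH] //; rewrite Dk_S.
have := step_gt k (Dk k p) (leq_trans h IH); lia.
Qed.

Lemma nmf_ge2 k : 2 <= nmf k.
Proof.
elim: k => [|k IH] //; rewrite nmf_S.
have := nmf_pos k (leq_trans (isT : 0 < 2) IH) (2 ^ k); rewrite -/(npf k). nia.
Qed.

Lemma Dk_ge k p : nmf k <= Dk k p.
Proof. apply: nmf_pos; have := nmf_ge2 k; lia. Qed.

Lemma Dk_lt k p q : p < q -> Dk k p < Dk k q.
Proof.
move=> /subnK <-; elim: (q - p.+1) => [|d IH].
  rewrite add0n Dk_S; apply: step_gt; have := Dk_ge k p; have := nmf_ge2 k; lia.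
rewrite addSn Dk_S; apply: leq_trans IH _; apply: ltnW; apply: step_gt.
have := Dk_ge k (d + p.+1); have := nmf_ge2 k; lia.
Qed.

Lemma Dk_le k p q : p <= q -> Dk k p <= Dk k q.
Proof. by rewrite leq_eqVlt => /orP [/eqP -> //| /(Dk_lt k) /ltnW]. Qed.

Lemma npf_ge k : nmf k <= npf k.
Proof. exact: Dk_ge. Qed.

Lemma incr_of_bounds f : (forall k, nmf k <= f k <= npf k) -> incr f.
Proof.
move=> H k; have := H k; have := H k.+1; rewrite nmf_S; have := nmf_ge2 k; nia.
Qed.

Fixpoint posc (al : nat -> bool) k := if k is k'.+1 then (posc al k').*2 + al k' else 0.

Lemma pos_lt al k : posc al k < 2 ^ k.
Proof.
elim: k => [|k IH] //=; rewrite expnS; case: (al k) => /=; lia.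
Qed.

Lemma pos_inj al be k : posc al k = posc be k -> forall i, i < k -> al i = be i.
Proof.
elim: k => [|k IH] //= E i hi.
have [E1 E2] : posc al k = posc be k /\ al k = be k.
  by move: E; case: (al k); case: (be k) => /=; lia.
by move: hi; rewrite ltnS leq_eqVlt => /orP [/eqP -> // | ]; apply: IH.
Qed.
Open Scope R_scope.

Lemma expn_pow m n : (m ^ n = Nat.pow m n)%N.
Proof. by elim: n => // n IH; rewrite expnS IH. Qed.

Lemma INR_le' m n : (m <= n)%N -> (INR m <= INR n).
Proof. by move/leP; apply: le_INR. Qed.

Arguments INR_le' {m n}.

Lemma ln_le' a b : (0 < a) -> (a <= b) -> (ln a <= ln b).
Proof.
move=> ha hb; case: (Rle_lt_or_eq_dec _ _ hb) => h.
  by apply: Rlt_le; apply: ln_increasing.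
by rewrite h; apply: Rle_refl.
Qed.

Arguments ln_le' {a b}.

Lemma ln_pos' x : (2 <= x)%N -> (0 < ln (INR x)).
Proof.
move=> hx; rewrite -ln_1; apply: ln_increasing; first lra.
have := INR_le' hx; rewrite /= ; lra.
Qed.

Lemma INR_pos' x : (0 < x)%N -> (0 < INR x).
Proof. by move/ltP; apply: lt_0_INR. Qed.

Arguments INR_pos' {x}.
Arguments ln_pos' {x}.

Lemma ln_INR_pow x n : (0 < x)%N -> ln (INR (x ^ n)%N) = (INR n * ln (INR x)).
Proof. by move=> hx; rewrite expn_pow pow_INR ln_pow //; apply: INR_pos'. Qed.

Lemma logb_ge (x y n : nat) : (2 <= x)%N -> (x ^ n <= y)%N ->
  (INR n <= ln (INR y) / ln (INR x)).
Proof.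
move=> hx hy; have lx := ln_pos' hx.
have h1 : (INR n * ln (INR x) <= ln (INR y)).
  rewrite -ln_INR_pow; last by lia.
  apply: ln_le'; last exact: INR_le'.
  apply: INR_pos'; rewrite expn_gt0; apply/orP; left; lia.
apply: (Rmult_le_reg_r (ln (INR x))) => //.
rewrite /Rdiv Rmult_assoc Rinv_l; lra.
Qed.

Lemma logb_le (x y n : nat) : (2 <= x)%N -> (0 < y)%N -> (y <= x ^ n)%N ->
  (ln (INR y) / ln (INR x) <= INR n).
Proof.
move=> hx hy0 hy; have lx := ln_pos' hx.
have h1 : (ln (INR y) <= INR n * ln (INR x)).
  rewrite -ln_INR_pow; last by lia.
  apply: ln_le'; [exact: INR_pos' | exact: INR_le'].
apply: (Rmult_le_reg_r (ln (INR x))) => //.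
rewrite /Rdiv Rmult_assoc Rinv_l; lra.
Qed.

Lemma ratio_le (x y k : nat) : (0 < y)%N -> (k.+1 * x <= y)%N ->
  (INR x / INR y <= / INR k.+1).
Proof.
move=> hy hxy; have py := INR_pos' hy.
have pk : (0 < INR k.+1) by apply: INR_pos'.
have h : (INR k.+1 * INR x <= INR y) by rewrite -mult_INR; apply: INR_le'.
apply: (Rmult_le_reg_r (INR y * INR k.+1)); first by apply: Rmult_lt_0_compat.
have -> : (INR x / INR y * (INR y * INR k.+1) = INR k.+1 * INR x) by field; lra.
have -> : (/ INR k.+1 * (INR y * INR k.+1) = INR y) by field; lra.
exact: h.
Qed.

Close Scope R_scope.

Arguments incr_mono {f}.
Definition dd (al : nat -> bool) k := Dk k (posc al k).
Definition Fh al k := hh k (dd al k).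
Definition Fg al k := gg k (dd al k).
Definition Fb al k := bb k (dd al k).
Definition Fc al k := cc k (dd al k).
Definition Fu al k := f_aux (Fb al) (Fg al) k + k.
Definition Fa al := slalom_count (Fb al) (Fg al).
Definition FF al := Tuple8 (Fa al) (dd al) (Fb al) (Fg al) (Fc al) (Fh al)
  (e_aux (Fu al)) (Fu al).

Lemma dd_bounds al k : nmf k <= dd al k /\ step k (dd al k) <= npf k.
Proof.
split; first exact: Dk_ge.
rewrite /dd -Dk_S; apply: Dk_le; exact: pos_lt.
Qed.

Lemma dd_ge2 al k : 2 <= dd al k.
Proof. have := nmf_ge2 k; have [h _] := dd_bounds al k; lia. Qed.

Lemma band_all k D : 0 < D -> [/\ D <= hh k D, hh k D < gg k D, gg k D <= bb k D,
  bb k D < cc k D & cc k D < top k D].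
Proof.
move=> hD; split; [exact: band_hh | exact: band_hg | exact: band_gb | exact: band_bc' |
  exact: band_ct].
Qed.

Lemma bb_cc k D : 2 ^ bb k D <= cc k D.
Proof. by rewrite /cc; apply: leq_pexp2l => //; rewrite leq_pmull. Qed.

Lemma slal1 al k : Fb al k <= Fa al k <= Fc al k.
Proof.
rewrite /Fa /slalom_count; apply/andP; split.
  by apply: sum_bin_ge; rewrite ltnS /Fg /gg addn1.
apply: leq_trans (sum_bin_le _ _) _; exact: bb_cc.
Qed.

Lemma slal2 al k : Fc al k <= slalom_count (Fc al) (Fh al) k <= top k (dd al k).
Proof.
rewrite /slalom_count; apply/andP; split; last exact: sum_bin_le.
apply: sum_bin_ge; rewrite ltnS; have := band_hh k (dd al k); have := dd_ge2 al k.
rewrite /Fh; lia.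
Qed.

Lemma inb al k x : dd al k <= x <= top k (dd al k) -> in_bounds nmf npf k x.
Proof.
move=> /andP [h1 h2]; have [h3 h4] := dd_bounds al k; have := band_ts k (dd al k).
rewrite /in_bounds; lia.
Qed.

Ltac bandfacts al k :=
  have := dd_ge2 al k; have [? ? ? ? ?] := band_all k (dd al k) (ltnW (dd_ge2 al k));
  have := slal1 al k; have := slal2 al k;
  rewrite /Fh /Fg /Fb /Fc.

Lemma all_inb al k :
  in_bounds nmf npf k (dd al k) /\ in_bounds nmf npf k (Fh al k) /\
      in_bounds nmf npf k (Fg al k) /\ in_bounds nmf npf k (Fb al k) /\
      in_bounds nmf npf k (Fc al k) /\ in_bounds nmf npf k (Fa al k) /\
      in_bounds nmf npf k (slalom_count (Fc al) (Fh al) k).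
Proof.
repeat split; apply: (inb al); bandfacts al k; lia.
Qed.

Lemma incr_inb (f : nat -> nat) : (forall k, in_bounds nmf npf k (f k)) -> incr f.
Proof. by move=> H; apply: incr_of_bounds. Qed.

Lemma incr_all al : incr (Fa al) /\ incr (dd al) /\ incr (Fb al) /\ incr (Fg al) /\
  incr (Fc al) /\ incr (Fh al).
Proof.
by repeat split; apply: incr_inb => k; have [? [? [? [? [? [? ?]]]]]] := all_inb al k.
Qed.

Lemma Fg_pos al l : 1 <= Fg al l.
Proof. by rewrite /Fg /gg addn1. Qed.

Lemma Fh_pos al l : 1 <= Fh al l.
Proof. have := dd_ge2 al l; have := band_hh l (dd al l); rewrite /Fh; lia. Qed.

Lemma f_aux_mono b g k k' : (forall l, 1 <= g l) -> k <= k' ->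
  f_aux b g k <= f_aux b g k'.
Proof.
move=> hg hk; rewrite /f_aux; apply: (sum_mono (fun l => up_log 2 (b l))).
by rewrite ltnS; apply: blk_mono.
Qed.

Lemma Fu_incr al : incr (Fu al).
Proof.
move=> k; rewrite /Fu; have := @f_aux_mono (Fb al) (Fg al) k k.+1 (Fg_pos al) (leqnSn k).
lia.
Qed.

Lemma Fu_ge al k : k <= Fu al k.
Proof. by rewrite /Fu leq_addl. Qed.

Lemma e_spec u k : incr u -> (forall x, x <= u x) ->
  e_aux u k < k.+1 /\ k < u (2 ^ e_aux u k).
Proof.
move=> hu hx; rewrite expn_pow.
apply: (@find_iota_spec (fun n => k < u (Nat.pow 2 n)) _ k) => //.
rewrite -expn_pow; apply: leq_trans (hx _); exact: ltn_expl.
Qed.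

Lemma e_mono u : incr u -> (forall x, x <= u x) -> nondecr (e_aux u).
Proof.
move=> hu hx k; have [_ h] := e_spec u k.+1 hu hx.
apply: (@find_iota_le (fun n => k < u (Nat.pow 2 n))).
by rewrite /= -expn_pow; apply: ltnW.
Qed.

Lemma e_lb u x m : incr u -> (forall x, x <= u x) -> u (2 ^ m) <= x -> m <= e_aux u x.
Proof.
move=> hu hx hm; rewrite leqNgt; apply/negP => hlt.
have [_ h] := e_spec u x hu hx.
have : u (2 ^ e_aux u x) <= u (2 ^ m).
  apply: (incr_mono hu); apply: leq_pexp2l => //; exact: ltnW.
lia.
Qed.

Lemma up_log_le y : up_log 2 y <= y.
Proof. by apply: up_log_min => //; apply: ltnW; apply: ltn_expl. Qed.

Lemma pow_up_log k : 0 < k -> 2 ^ up_log 2 k <= k.*2.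
Proof.
move=> hk; case: (ltnP 1 k) => h.
  have := up_log_gtn (isT : 1 < 2) h; have : 0 < up_log 2 k by rewrite up_log_gt0 h.
  case: (up_log 2 k) => [|j] //= _; rewrite expnS; lia.
have -> : k = 1 by lia.
by rewrite up_log1.
Qed.

Lemma MS2_nat al k : 0 < k ->
  (up_log 2 k).*2 <= e_aux (Fu al) (g_aux (Fc al) (Fh al) k).
Proof.
move=> hk.
have [hn1 hn2] := @blk_spec (Fh al) k (Fh_pos al).
set n := blk (Fh al) k in hn1 hn2.
have [_ [_ [hbi [hgi [_ hhi]]]]] := incr_all al.
rewrite /g_aux -/n /Fc /cc trunc_expnK // -/(Fb al n).
apply: e_lb; [exact: Fu_incr | exact: Fu_ge |].
set K := 4 * (psum (Fh al) n.+1 * psum (Fh al) n.+1).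
have h1 : 2 ^ (up_log 2 k).*2 <= K.
  rewrite -addnn expnD; have := pow_up_log k hk; rewrite /K; nia.
have hps : psum (Fh al) n.+1 <= n.+1 * Fh al n.
  apply: sum_le_const => l hl; apply: (incr_mono hhi); lia.
have hKg : K < Fg al n.
  rewrite /K /Fg /gg -/(Fh al n); nia.
have hbl : blk (Fg al) K <= n.
  by apply: blk_le; rewrite psumS; lia.
have hf : f_aux (Fb al) (Fg al) K <= n.+1 * Fb al n.
  apply: leq_trans (_ : (blk (Fg al) K).+1 * Fb al n <= _); last by rewrite leq_mul2r ltnS hbl orbT.
  rewrite /f_aux; apply: (sum_le_const (fun l => up_log 2 (Fb al l))) => l hl; apply: leq_trans (up_log_le _) _.
  apply: (incr_mono hbi); lia.
have hgb : Fg al n <= Fb al n by apply: band_gb; have := dd_ge2 al n; lia.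
apply: leq_trans (_ : Fu al K <= _).
  by apply: (incr_mono (Fu_incr al)).
rewrite /Fu; nia.
Qed.
Open Scope R_scope.

Lemma INR2 : INR 2 = 2.
Proof. simpl; lra. Qed.

Lemma MS2_real al k : (1 <= k)%N ->
  INR (e_aux (Fu al) (g_aux (Fc al) (Fh al) k)) >= 2 * log2 (INR k).
Proof.
move=> hk; have h1 := MS2_nat al k hk.
have h2 := logb_le 2 k (up_log 2 k) isT hk (up_logP k (isT : (1 < 2)%N)).
have h3 := INR_le' h1.
rewrite -addnn plus_INR in h3; rewrite INR2 in h2.
rewrite /log2; lra.
Qed.

Lemma S2_limsup al : forall (M : R) (N : nat), exists k, (N <= k)%N /\
  M < / INR (dd al k) * log_base (INR (dd al k)) (INR (Fh al k + 1)).
Proof.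
move=> M N; have [n0 hn0] := INR_unbounded M.
exists (N + n0)%N; split; first exact: leq_addr.
set k := (N + n0)%N; set D := dd al k.
have hD := dd_ge2 al k; rewrite -/D in hD.
have pD : 0 < INR D by apply: INR_pos'; lia.
have hl := logb_ge D (Fh al k + 1) (D * k.+1) hD (leq_addr _ _).
rewrite mult_INR in hl; rewrite /log_base.
have hk : INR n0 <= INR k.+1 by apply: INR_le'; rewrite /k; lia.
apply: Rlt_le_trans (_ : / INR D * (INR D * INR k.+1) <= _).
  rewrite -Rmult_assoc Rinv_l; lra.
apply: Rmult_le_compat_l => //; left; exact: Rinv_0_lt_compat.
Qed.

Lemma ratio_eq al k : INR (Fb al k) / INR (Fg al k) = INR (dd al k).
Proof.
have hg : 0 < INR (Fg al k) by apply: INR_pos'; exact: Fg_pos.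
rewrite /Fb /bb mult_INR -/(Fg al k); field; lra.
Qed.

Lemma Rmin_nonneg x y : 0 <= x -> 0 <= y -> 0 <= Rmin x y.
Proof. by move=> hx hy; apply: Rmin_glb. Qed.

Lemma div_nonneg x y : (0 < y)%N -> 0 <= INR x / INR y.
Proof.
move=> hy; apply: Rmult_le_pos; first exact: pos_INR.
left; apply: Rinv_0_lt_compat; exact: INR_pos'.
Qed.

Lemma S7 al be : be <> al -> pair_cond (FF al) (FF be).
Proof.
move=> hne.
have [i hi] : exists i, al i <> be i.
  apply: NNPP => hn; apply: hne; apply: functional_extensionality => x.
  by apply: NNPP => hx; apply: hn; exists x => hx'; apply: hx; rewrite hx'.
move=> eps heps.
have [n0 hn0] := INR_unbounded (/ eps).
exists (i.+1 + n0)%N => n hn; move/leP: hn => hn.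
rewrite /R_dist Rminus_0_r /=.
have hda := dd_ge2 al n; have hdb := dd_ge2 be n.
have nn : 0 <= Rmin (INR (slalom_count (Fc be) (Fh be) n) / INR (dd al n))
            (INR (Fa al n) / INR (dd be n)).
  by apply: Rmin_nonneg; apply: div_nonneg; lia.
rewrite Rabs_right; last lra.
have hpos : posc al n <> posc be n.
  by move=> /pos_inj h; apply: hi; apply: h; lia.
have hinv : / INR n.+1 < eps.
  have hn1 : / eps < INR n.+1.
    apply: Rlt_le_trans hn0 _; apply: INR_le'; lia.
  have pe : 0 < / eps by apply: Rinv_0_lt_compat.
  rewrite -(Rinv_inv eps); apply: Rinv_lt_contravar => //.
  apply: Rmult_lt_0_compat => //; lra.
apply: Rle_lt_trans hinv.
case: (ltngtP (posc al n) (posc be n)) => hp //.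
- apply: Rle_trans (Rmin_r _ _) _.
  apply: ratio_le; first lia.
  have h1 : (step n (dd al n) <= dd be n)%N by rewrite /dd -Dk_S; apply: Dk_le.
  have := slal1 al n; have := band_ct n (dd al n); rewrite /step in h1; rewrite /Fc.
  move=> ? /andP [_ ?]; nia.
- apply: Rle_trans (Rmin_l _ _) _.
  apply: ratio_le; first lia.
  have h1 : (step n (dd be n) <= dd al n)%N by rewrite /dd -Dk_S; apply: Dk_le.
  have := slal2 be n; rewrite /step in h1.
  move=> /andP [_ ?]; nia.
Qed.

Lemma bounding : bounding_seqs nmf npf.
Proof.
split; first exact: nmf_ge2.
split; first by move=> k; have := nmf_ge2 k; have := npf_ge k; lia.
split; first by move=> k; rewrite nmf_S; lia.
move=> M; have [n0 hn0] := INR_unbounded M; exists n0 => n /leP hn.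
rewrite /log_base.
have hm := nmf_ge2 n.
have hp : (nmf n ^ n.+1 <= npf n)%N.
  apply: leq_trans (_ : hh n (nmf n) <= _)%N.
    by apply: leq_pexp2l; [lia | rewrite leq_pmull; lia].
  apply: leq_trans (_ : top n (nmf n) <= _)%N.
    have [? ? ? ? ?] := band_all n (nmf n) (ltnW hm); lia.
  apply: leq_trans (band_ts _ _) _.
  have -> : step n (nmf n) = Dk n 1 by [].
  by apply: Dk_le; rewrite expn_gt0.
have := logb_ge (nmf n) (npf n) n.+1 hm hp.
have : INR n0 <= INR n.+1 by apply: INR_le'; lia.
lra.
Qed.

Close Scope R_scope.

Lemma single al : single_conds nmf npf (FF al).
Proof.
rewrite /single_conds /=.
have [ia [id [ib [ig [ic ih]]]]] := incr_all al.
have iu := Fu_incr al.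
have ie := e_mono (Fu al) iu (Fu_ge al).
do 8 (split; first done).
split.
  move=> k; have [b1 [b2 [b3 [b4 [b5 [b6 b7]]]]]] := all_inb al k.
  do 4 (split; first done).
  split; first exact: b6.
  split.
    rewrite ratio_eq; move: b1; rewrite /in_bounds => /andP [x1 x2].
    by split; apply: INR_le'.
  done.
split.
  move=> k; have := band_hg k (dd al k); have := band_gb k (dd al k);
  have := band_bc' k (dd al k); have := dd_ge2 al k; rewrite /Fh /Fc /Fg /Fb; lia.
split; first exact: S2_limsup.
split; first by move=> k; rewrite ratio_eq; right.
split; first by move=> k; rewrite /Fa.
split; first by [].
split; first by move=> k; apply: MS2_real.
by move=> k; rewrite /Fu leq_addr.
Qed.

Theorem proposition6p7 :
  exists (nm np : nat -> nat) (F : (nat -> bool) -> tuple8),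
    bounding_seqs nm np /\
    modified_suitable_family nm np F /\
    (forall alpha beta : nat -> bool, F alpha = F beta -> alpha = beta).
Proof.
exists nmf, npf, FF; split; first exact: bounding.
split; first by split; [exact: single | move=> al be h; exact: S7].
move=> al be E; apply: functional_extensionality => i.
have /(congr1 (fun f => f i.+1)) : td (FF al) = td (FF be) by rewrite E.
rewrite /= /dd => hD.
have hp : posc al i.+1 = posc be i.+1.
  case: (ltngtP (posc al i.+1) (posc be i.+1)) => // h.
    by have := Dk_lt i.+1 _ _ h; rewrite hD ltnn.
  by have := Dk_lt i.+1 _ _ h; rewrite hD ltnn.
exact: pos_inj al be i.+1 hp i (ltnSn i).
Qed.
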